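(* Identify the tangent space of $\mathbb OP^{(1,1)}$ at $P_0=[1,0,0]$ with $\mathbb O^2$ via the chart $[1,u,v]\mapsto(u,v)$, a pair $(a,b)$ corresponding to the tangent vector with $du=a$, $dv=b$. Then the Riemann curvature tensor of $(\mathbb OP^{(1,1)},g)$ at $P_0$ is $$\begin{aligned}R\big((a,b),(c,d),(e,f),(g,h)\big)=&\,4\langle a,e\rangle\langle c,g\rangle-4\langle c,e\rangle\langle a,g\rangle+4\langle b,f\rangle\langle d,h\rangle-4\langle d,f\rangle\langle b,h\rangle\\&+\langle e\bar d,g\bar b\rangle-\langle e\bar b,g\bar d\rangle+\langle c\bar f,a\bar h\rangle-\langle a\bar f,c\bar h\rangle+\langle a\bar d-c\bar b,\ g\bar f-e\bar h\rangle.\end{aligned}$$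
   Context: Octonions $\mathbb O=\mathbb H\oplus\mathbb H$ with product $(q_1,q_2)(p_1,p_2)=(q_1p_1-\bar p_2q_2,\ p_2q_1+q_2\bar p_1)$, conjugation $\overline{(q_1,q_2)}=(\bar q_1,-q_2)$, $\langle a,b\rangle=\mathrm{Re}(a\bar b)$, $|a|^2=\langle a,a\rangle$. $\mathbb OP^{(1,1)}=(U_1\cup U_2)/_\sim$ with $U_1=\{(1,u,v):1+|u|^2-|v|^2>0\}$, $U_2=\{(u,1,v):|u|^2+1-|v|^2>0\}$ and $[a,b,c]\sim[d,e,f]$ iff $(a,b,c)=(d\lambda,e\lambda,f\lambda)$ for some $\lambda\ne0$; charts $[1,u,v]\mapsto(u,v)$, $[u,1,v]\mapsto(u,v)$. Metric $g$ on each chart, for tangent vector $(du,dv)=(\xi,\eta)$: $ds^2=\frac{|\xi|^2(1-|v|^2)-|\eta|^2(1+|u|^2)+2\mathrm{Re}[(u\bar v)(\eta\bar\xi)]}{(1+|u|^2-|v|^2)^2}$. Curvature convention: in coordinates in which first derivatives of the metric vanish at the point, $R_{\alpha\beta\gamma\delta}=\tfrac12\big[\partial_\alpha\partial_\delta g_{\beta\gamma}+\partial_\beta\partial_\gamma g_{\alpha\delta}-\partial_\beta\partial_\delta g_{\alpha\gamma}-\partial_\alpha\partial_\gamma g_{\beta\delta}\big]$. *)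

(* Defs.v *)
From Stdlib Require Import Reals.
From Coquelicot Require Import Coquelicot.
Open Scope R_scope.

(* ---------- Quaternions H = R^4, basis 1,i,j,k with i^2=j^2=k^2=ijk=-1 ---------- *)
Record H := mkH { h0 : R; h1 : R; h2 : R; h3 : R }.

Definition hadd (p q : H) : H :=
  mkH (h0 p + h0 q) (h1 p + h1 q) (h2 p + h2 q) (h3 p + h3 q).
Definition hopp (p : H) : H := mkH (- h0 p) (- h1 p) (- h2 p) (- h3 p).
Definition hsub (p q : H) : H := hadd p (hopp q).
Definition hscale (r : R) (p : H) : H := mkH (r * h0 p) (r * h1 p) (r * h2 p) (r * h3 p).
Definition hmul (p q : H) : H :=
  mkH (h0 p * h0 q - h1 p * h1 q - h2 p * h2 q - h3 p * h3 q)
      (h0 p * h1 q + h1 p * h0 q + h2 p * h3 q - h3 p * h2 q)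
      (h0 p * h2 q - h1 p * h3 q + h2 p * h0 q + h3 p * h1 q)
      (h0 p * h3 q + h1 p * h2 q - h2 p * h1 q + h3 p * h0 q).
Definition hconj (p : H) : H := mkH (h0 p) (- h1 p) (- h2 p) (- h3 p).

(* ---------- Octonions O = H (+) H (Cayley-Dickson, as in the paper) ---------- *)
Record O := mkO { o1 : H; o2 : H }.

Definition oadd (a b : O) : O := mkO (hadd (o1 a) (o1 b)) (hadd (o2 a) (o2 b)).
Definition osub (a b : O) : O := mkO (hsub (o1 a) (o1 b)) (hsub (o2 a) (o2 b)).
Definition oscale (r : R) (a : O) : O := mkO (hscale r (o1 a)) (hscale r (o2 a)).
(* (q1,q2)(p1,p2) = (q1 p1 - conj(p2) q2, p2 q1 + q2 conj(p1)) *)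
Definition omul (a b : O) : O :=
  mkO (hsub (hmul (o1 a) (o1 b)) (hmul (hconj (o2 b)) (o2 a)))
      (hadd (hmul (o2 b) (o1 a)) (hmul (o2 a) (hconj (o1 b)))).
Definition oconj (a : O) : O := mkO (hconj (o1 a)) (hopp (o2 a)).
Definition oRe (a : O) : R := h0 (o1 a).
Definition oinner (a b : O) : R := oRe (omul a (oconj b)).
Definition onorm2 (a : O) : R := oinner a a.

Definition O2 := (O * O)%type.
Definition o2add (X Y : O2) : O2 := (oadd (fst X) (fst Y), oadd (snd X) (snd Y)).
Definition o2scale (r : R) (X : O2) : O2 := (oscale r (fst X), oscale r (snd X)).
Definition o2zero : O2 := let z := mkO (mkH 0 0 0 0) (mkH 0 0 0 0) in (z, z).

Definition ds2 (p X : O2) : R :=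
  let u := fst p in let v := snd p in let xi := fst X in let eta := snd X in
  (onorm2 xi * (1 - onorm2 v) - onorm2 eta * (1 + onorm2 u)
     + 2 * oRe (omul (omul u (oconj v)) (omul eta (oconj xi))))
  / (1 + onorm2 u - onorm2 v) ^ 2.

Definition gmet (p X Y : O2) : R :=
  (ds2 p (o2add X Y) - ds2 p X - ds2 p Y) / 2.

Definition dg (X Y Z : O2) : R :=
  Derive (fun s => gmet (o2scale s X) Y Z) 0.

Definition d2g (X W Y Z : O2) : R :=
  Derive (fun s => Derive (fun t => gmet (o2add (o2scale s X) (o2scale t W)) Y Z) 0) 0.

(* Curvature at P0 = [1,0,0] (chart point (0,0)) with the paper's convention
   R_{abcd} = 1/2 [d_a d_d g_bc + d_b d_c g_ad - d_b d_d g_ac - d_a d_c g_bd],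
   valid since the chart coordinates have vanishing first derivatives of g at 0
   (this is also asserted in the theorem). *)
Definition Rcurv0 (X Y Z W : O2) : R :=
  / 2 * (d2g X W Y Z + d2g Y Z X W - d2g Y W X Z - d2g X Z Y W).

(* Main.v *)
Require Import Defs.
From Stdlib Require Import Reals Lra.
From Coquelicot Require Import Coquelicot.
Open Scope R_scope.

Definition T (u v w z : O) : R := oRe (omul (omul u (oconj v)) (omul w (oconj z))).
Definition oz : O := mkO (mkH 0 0 0 0) (mkH 0 0 0 0).

Ltac dO x := let a := fresh "x" in let b := fresh "x" in let c := fresh "x" in let d := fresh "x" in
  let e := fresh "x" in let f := fresh "x" in let g := fresh "x" in let h := fresh "x" in
  destruct x as [[a b c d] [e f g h]].
Ltac unf := cbv beta delta [oz T oinner onorm2 oRe omul oconj oadd osub oscale hsub hadd hopp hmul hconj hscale h0 h1 h2 h3 o1 o2] iota zeta.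
Ltac crush := unf; ring.
Ltac crushO := unf; f_equal; f_equal; ring.

Lemma omul_addl a b c : omul (oadd a b) c = oadd (omul a c) (omul b c).
Proof. dO a; dO b; dO c; crushO. Qed.
Lemma omul_addr a b c : omul c (oadd a b) = oadd (omul c a) (omul c b).
Proof. dO a; dO b; dO c; crushO. Qed.
Lemma omul_scl r a c : omul (oscale r a) c = oscale r (omul a c).
Proof. dO a; dO c; crushO. Qed.
Lemma omul_scr r a c : omul c (oscale r a) = oscale r (omul c a).
Proof. dO a; dO c; crushO. Qed.
Lemma omul_zl c : omul oz c = oz.
Proof. dO c; crushO. Qed.
Lemma oconj_add a b : oconj (oadd a b) = oadd (oconj a) (oconj b).
Proof. dO a; dO b; crushO. Qed.
Lemma oconj_sc r a : oconj (oscale r a) = oscale r (oconj a).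
Proof. dO a; crushO. Qed.
Lemma oRe_add a b : oRe (oadd a b) = oRe a + oRe b.
Proof. dO a; dO b; crush. Qed.
Lemma oRe_sc r a : oRe (oscale r a) = r * oRe a.
Proof. dO a; crush. Qed.
Lemma oRe_z : oRe oz = 0.
Proof. crush. Qed.

Ltac lin := repeat (rewrite ?omul_addl, ?omul_addr, ?omul_scl, ?omul_scr, ?oconj_add, ?oconj_sc, ?omul_zl, ?oRe_add, ?oRe_sc, ?oRe_z); ring.

Lemma T_add1 a b v w z : T (oadd a b) v w z = T a v w z + T b v w z.
Proof. unfold T; lin. Qed.
Lemma T_add2 a b v w z : T v (oadd a b) w z = T v a w z + T v b w z.
Proof. unfold T; lin. Qed.
Lemma T_add3 a b v w z : T v w (oadd a b) z = T v w a z + T v w b z.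
Proof. unfold T; lin. Qed.
Lemma T_add4 a b v w z : T v w z (oadd a b) = T v w z a + T v w z b.
Proof. unfold T; lin. Qed.
Lemma T_sc1 r a v w z : T (oscale r a) v w z = r * T a v w z.
Proof. unfold T; lin. Qed.
Lemma T_sc2 r a v w z : T v (oscale r a) w z = r * T v a w z.
Proof. unfold T; lin. Qed.
Lemma T_z1 v w z : T oz v w z = 0.
Proof. unfold T; lin. Qed.
Lemma in_addl a b c : oinner (oadd a b) c = oinner a c + oinner b c.
Proof. unfold oinner; lin. Qed.
Lemma in_addr a b c : oinner c (oadd a b) = oinner c a + oinner c b.
Proof. unfold oinner; lin. Qed.
Lemma in_scl r a c : oinner (oscale r a) c = r * oinner a c.
Proof. unfold oinner; lin. Qed.
Lemma in_scr r a c : oinner c (oscale r a) = r * oinner c a.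
Proof. unfold oinner; lin. Qed.
Lemma in_z c : oinner oz c = 0.
Proof. unfold oinner; lin. Qed.
Lemma in_sym a b : oinner a b = oinner b a.
Proof. dO a; dO b; crush. Qed.
Lemma in_subl a b c : oinner (osub a b) c = oinner a c - oinner b c.
Proof. dO a; dO b; dO c; crush. Qed.
Lemma in_subr a b c : oinner c (osub a b) = oinner c a - oinner c b.
Proof. dO a; dO b; dO c; crush. Qed.
Lemma in_T x y z w : oinner (omul x (oconj y)) (omul z (oconj w)) = T x y w z.
Proof. dO x; dO y; dO z; dO w; crush. Qed.
Lemma T_sym1 u v w z : T u v w z = T w z u v.
Proof. dO u; dO v; dO w; dO z; crush. Qed.
Lemma T_sym2 u v w z : T u v w z = T z w v u.
Proof. dO u; dO v; dO w; dO z; crush. Qed.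
Lemma T_rel x y z w : T x y z w + T x z y w = 2 * oinner x w * oinner y z.
Proof. dO x; dO y; dO z; dO w; crush. Qed.
Lemma first_d A al a : Derive (fun s => (A + s^2*al) / (1 + s^2*a)^2) 0 = 0.
Proof.
  apply is_derive_unique. auto_derive;
  assert (E : 1 + 0 * (0 * 1) * a = 1) by ring; rewrite E.
  - lra.
  - field.
Qed.

Lemma inner_d A al be ga a b c s : 1 + s^2*a <> 0 ->
  Derive (fun t => (A + s^2*al + s*t*be + t^2*ga) / (1 + s^2*a + s*t*b + t^2*c)^2) 0
  = (s*be*(1+s^2*a) - 2*(A+s^2*al)*(s*b)) / (1+s^2*a)^3.
Proof.
  intro Hs. apply is_derive_unique. auto_derive;
  assert (E : 1 + s*(s*1)*a + s*0*b + 0*(0*1)*c = 1 + s^2*a) by ring; rewrite E.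
  - rewrite Rmult_1_r; apply Rmult_integral_contrapositive_currified; auto.
  - field; auto.
Qed.

Lemma loc_pos a : locally 0 (fun s => 1 + s^2*a <> 0).
Proof.
  assert (Hp : 0 < / (1 + Rabs a)) by (apply Rinv_0_lt_compat; generalize (Rabs_pos a); lra).
  exists (mkposreal _ Hp). intros y Hy. change (Rabs (y - 0) < / (1 + Rabs a)) in Hy.
  rewrite Rminus_0_r in Hy.
  assert (Ha := Rabs_pos a). assert (Hy0 := Rabs_pos y).
  assert (H1 : Rabs y * (1 + Rabs a) < 1).
  { apply (Rmult_lt_compat_r (1 + Rabs a)) in Hy; [|lra].
    rewrite Rinv_l in Hy; lra. }
  assert (H2 : Rabs (y^2*a) < 1).
  { rewrite Rabs_mult, <- RPow_abs. simpl. rewrite Rmult_1_r.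
    nra. }
  apply Rabs_def2 in H2. lra.
Qed.

Lemma mixed_d A al be ga a b c :
  Derive (fun s => Derive (fun t => (A + s^2*al + s*t*be + t^2*ga) / (1 + s^2*a + s*t*b + t^2*c)^2) 0) 0
  = be - 2*A*b.
Proof.
  rewrite (Derive_ext_loc _ (fun s => (s*be*(1+s^2*a) - 2*(A+s^2*al)*(s*b)) / (1+s^2*a)^3)).
  - apply is_derive_unique. auto_derive;
    assert (E : 1 + 0*(0*1)*a = 1) by ring; rewrite ?E.
    + lra.
    + field.
  - generalize (loc_pos a). apply filter_imp. intros s Hs. apply inner_d; auto.
Qed.

Definition Nf (p X : O2) : R :=
  onorm2 (fst X) * (1 - onorm2 (snd p)) - onorm2 (snd X) * (1 + onorm2 (fst p))
     + 2 * T (fst p) (snd p) (snd X) (fst X).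
Definition numf (p Y Z : O2) : R := (Nf p (o2add Y Z) - Nf p Y - Nf p Z) / 2.
Definition denf (p : O2) : R := 1 + onorm2 (fst p) - onorm2 (snd p).

Lemma gmet_eq p Y Z : gmet p Y Z = numf p Y Z / (denf p)^2.
Proof. unfold gmet, ds2, numf, Nf, denf, T, Rdiv. ring. Qed.

Lemma numf_NF u v y1 y2 z1 z2 : numf (u,v) (y1,y2) (z1,z2) =
  oinner y1 z1 * (1 - onorm2 v) - oinner y2 z2 * (1 + onorm2 u)
  + T u v y2 z1 + T u v z2 y1.
Proof.
  unfold numf, Nf, o2add, onorm2. cbn [fst snd].
  rewrite !in_addl, !in_addr, !T_add3, !T_add4.
  rewrite (in_sym z1 y1), (in_sym z2 y2). field.
Qed.

Ltac expand := repeat (rewrite ?in_addl, ?in_addr, ?in_scl, ?in_scr, ?T_add1, ?T_add2, ?T_sc1, ?T_sc2).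

Lemma den_quad s t x1 x2 w1 w2 : denf (o2add (o2scale s (x1,x2)) (o2scale t (w1,w2))) =
  1 + s^2*(onorm2 x1 - onorm2 x2) + s*t*(2*oinner x1 w1 - 2*oinner x2 w2) + t^2*(onorm2 w1 - onorm2 w2).
Proof.
  unfold denf, o2add, o2scale, onorm2; cbn [fst snd]. expand.
  rewrite (in_sym w1 x1), (in_sym w2 x2). ring.
Qed.

Lemma den_1 s x1 x2 : denf (o2scale s (x1,x2)) = 1 + s^2*(onorm2 x1 - onorm2 x2).
Proof.
  unfold denf, o2scale, onorm2; cbn [fst snd]. expand. ring.
Qed.

Definition Acoef (y1 y2 z1 z2 : O) := oinner y1 z1 - oinner y2 z2.
Definition alcoef (x1 x2 y1 y2 z1 z2 : O) :=
  - oinner y1 z1 * onorm2 x2 - oinner y2 z2 * onorm2 x1 + T x1 x2 y2 z1 + T x1 x2 z2 y1.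
Definition becoef (x1 x2 w1 w2 y1 y2 z1 z2 : O) :=
  -2 * oinner y1 z1 * oinner x2 w2 - 2 * oinner y2 z2 * oinner x1 w1
  + T x1 w2 y2 z1 + T w1 x2 y2 z1 + T x1 w2 z2 y1 + T w1 x2 z2 y1.

Lemma num_quad s t x1 x2 w1 w2 y1 y2 z1 z2 :
  numf (o2add (o2scale s (x1,x2)) (o2scale t (w1,w2))) (y1,y2) (z1,z2) =
  Acoef y1 y2 z1 z2 + s^2 * alcoef x1 x2 y1 y2 z1 z2
  + s*t * becoef x1 x2 w1 w2 y1 y2 z1 z2 + t^2 * alcoef w1 w2 y1 y2 z1 z2.
Proof.
  unfold o2add, o2scale; cbn [fst snd]. rewrite numf_NF.
  unfold Acoef, alcoef, becoef, onorm2. expand.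
  rewrite (in_sym w1 x1), (in_sym w2 x2). ring.
Qed.

Lemma num_1 s x1 x2 y1 y2 z1 z2 :
  numf (o2scale s (x1,x2)) (y1,y2) (z1,z2) =
  Acoef y1 y2 z1 z2 + s^2 * alcoef x1 x2 y1 y2 z1 z2.
Proof.
  unfold o2scale; cbn [fst snd]. rewrite numf_NF.
  unfold Acoef, alcoef, onorm2. expand. ring.
Qed.

Lemma dg0 X Y Z : dg X Y Z = 0.
Proof.
  destruct X as [x1 x2], Y as [y1 y2], Z as [z1 z2]. unfold dg.
  rewrite (Derive_ext _ (fun s => (Acoef y1 y2 z1 z2 + s^2 * alcoef x1 x2 y1 y2 z1 z2) /
     (1 + s^2*(onorm2 x1 - onorm2 x2))^2)).
  - apply first_d.
  - intro s. rewrite gmet_eq, num_1, den_1. reflexivity.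
Qed.

Lemma d2g_val x1 x2 w1 w2 y1 y2 z1 z2 :
  d2g (x1,x2) (w1,w2) (y1,y2) (z1,z2) =
  becoef x1 x2 w1 w2 y1 y2 z1 z2 - 2 * Acoef y1 y2 z1 z2 * (2*oinner x1 w1 - 2*oinner x2 w2).
Proof.
  unfold d2g. rewrite <- mixed_d with (al := alcoef x1 x2 y1 y2 z1 z2) (ga := alcoef w1 w2 y1 y2 z1 z2)
    (a := onorm2 x1 - onorm2 x2) (c := onorm2 w1 - onorm2 w2).
  apply Derive_ext; intro s. apply Derive_ext; intro t.
  rewrite gmet_eq, num_quad, den_quad. reflexivity.
Qed.

Theorem corollary7p5 :
  (forall X Y Z : O2, dg X Y Z = 0) /\
  (forall a b c d e f g h : O,
     Rcurv0 (a, b) (c, d) (e, f) (g, h) =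
       4 * oinner a e * oinner c g - 4 * oinner c e * oinner a g
     + 4 * oinner b f * oinner d h - 4 * oinner d f * oinner b h
     + oinner (omul e (oconj d)) (omul g (oconj b))
     - oinner (omul e (oconj b)) (omul g (oconj d))
     + oinner (omul c (oconj f)) (omul a (oconj h))
     - oinner (omul a (oconj f)) (omul c (oconj h))
     + oinner (osub (omul a (oconj d)) (omul c (oconj b)))
              (osub (omul g (oconj f)) (omul e (oconj h)))).
Proof.
  split; [exact dg0|].
  intros. unfold Rcurv0. rewrite !d2g_val. unfold becoef, Acoef.
  rewrite !in_subl, !in_subr, !in_T.
  rewrite (T_sym1 c f b g), (T_sym1 e d b g), (T_sym1 c f h a), (T_sym1 e d h a).
  rewrite (T_sym1 a f d g), (T_sym1 e b d g), (T_sym1 a f h c), (T_sym1 e b h c).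
  dO a; dO b; dO c; dO d; dO e; dO f; dO g; dO h; unf. Time field. Time Qed.
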